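(* Let $\varphi$ be an endomorphism of a periodic abelian group $A$. The following are equivalent: (MF) there is a subgroup $A_0$ of finite index in $A$ on which $\varphi$ acts as a multiplication; (FM) there is a finite $\varphi$-invariant subgroup $A_1$ of $A$ such that $\varphi$ induces a multiplication on $A/A_1$.
   Context: Abelian groups are written additively. On a periodic abelian group, a multiplication is the componentwise action of an element $\alpha=(\alpha_p)_p\in\prod_p\mathbb{Z}_p$ ($\mathbb{Z}_p$ the $p$-adic integers), $\alpha_p$ acting on the $p$-primary component in the natural way. ''$\varphi$ acts as a multiplication on $A_0$'' means $\varphi(a)=\alpha a$ for all $a\in A_0$, for some such $\alpha$. *)

(* Defs.v *)
From HB Require Import structures.
From mathcomp Require Import all_boot all_order all_algebra.
Set Implicit Arguments. Unset Strict Implicit. Unset Printing Implicit Defensive.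
Import Order.TTheory GRing.Theory Num.Theory.
Local Open Scope ring_scope.

(* p-adic integers: a p k : int is the residue of alpha_p modulo p^k,
   with compatibility a p (k+1) = a p k mod p^k.  An element of prod_p Z_p
   is such a family for all primes p (values at non-primes are irrelevant). *)
Record Zhat := ZHat {
  zhat_res :> nat -> nat -> int;
  zhat_compat : forall p k : nat, prime p ->
    (((p ^ k)%N)%:Z %| zhat_res p k.+1 - zhat_res p k)%Z }.

Definition periodic (A : zmodType) : Prop :=
  forall a : A, exists n : nat, (0 < n)%N /\ a *+ n = 0.

Definition is_subgroup (A : zmodType) (S : A -> Prop) : Prop :=
  S 0 /\ forall x y, S x -> S y -> S (x - y).

Definition finite_index (A : zmodType) (S : A -> Prop) : Prop :=
  exists s : seq A, forall a : A, exists2 b, b \in s & S (a - b).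

Definition finite_pred (A : zmodType) (S : A -> Prop) : Prop :=
  exists s : seq A, forall x : A, S x <-> x \in s.

(* [mult_mod B alpha a b]: in the quotient A/B (B a subgroup), the coset of
   b equals alpha times the coset of a.  If n > 0 kills a + B, then alpha
   acts on a + B (whose order divides n) as multiplication by any integer m
   congruent to alpha_p modulo p^(v_p(n)) for every prime p (this is the
   componentwise p-adic action, computed via the Chinese remainder theorem). *)
Definition mult_mod (A : zmodType) (B : A -> Prop) (alpha : Zhat) (a b : A)
  : Prop :=
  exists n : nat, (0 < n)%N /\ B (a *+ n) /\
    exists m : int,
      (forall p : nat, prime p ->
         (((p ^ logn p n)%N)%:Z %| m - alpha p (logn p n))%Z) /\
      B (b - a *~ m).

Definition acts_as_mult (A : zmodType) (phi : A -> A) (A0 : A -> Prop) : Prop :=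
  exists alpha : Zhat, forall a, A0 a -> mult_mod (fun x => x = 0) alpha a (phi a).

Definition induces_mult_quot (A : zmodType) (phi : A -> A) (A1 : A -> Prop)
  : Prop :=
  exists alpha : Zhat, forall a, mult_mod A1 alpha a (phi a).

(* Main.v *)
Require Import Defs.
From mathcomp Require Import all_boot all_order all_algebra.
From Stdlib Require Import Classical.
Set Implicit Arguments. Unset Strict Implicit. Unset Printing Implicit Defensive.
Import Order.TTheory GRing.Theory Num.Theory.
Local Open Scope ring_scope.

Definition PP (alpha : Zhat) (N : nat) (m : int) : Prop :=
  forall p : nat, prime p ->
    (((p ^ logn p N)%N)%:Z %| m - alpha p (logn p N))%Z.

Lemma natz_dvd (a b : nat) : ((a%:Z) %| (b%:Z))%Z = (a %| b)%N.
Proof. by rewrite dvdzE. Qed.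

Lemma compat_le (alpha : Zhat) p k k' : prime p -> (k <= k')%N ->
  (((p ^ k)%N)%:Z %| alpha p k' - alpha p k)%Z.
Proof.
move=> pp; elim: k' => [|k' IH]; first by rewrite leqn0 => /eqP->; rewrite subrr dvdz0.
rewrite leq_eqVlt => /orP[/eqP->|]; first by rewrite subrr dvdz0.
rewrite ltnS => kk; have H := IH kk.
have -> : alpha p k'.+1 - alpha p k = (alpha p k'.+1 - alpha p k') + (alpha p k' - alpha p k) by rewrite addrA subrK.
apply: rpredD => //.
apply: (dvdz_trans _ (zhat_compat alpha k' pp)).
by rewrite natz_dvd dvdn_exp2l.
Qed.

Lemma PP_div alpha d N m : (0 < N)%N -> (d %| N)%N -> PP alpha N m -> PP alpha d m.
Proof.
move=> N0 dN H p pp.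
have le := dvdn_leq_log p N0 dN.
have -> : m - alpha p (logn p d) = (m - alpha p (logn p N)) + (alpha p (logn p N) - alpha p (logn p d)) by rewrite addrA subrK.
apply: rpredD; last exact: compat_le.
apply: (dvdz_trans _ (H p pp)); by rewrite natz_dvd dvdn_exp2l.
Qed.

Lemma PP_uniq alpha N m m' : (0 < N)%N -> PP alpha N m -> PP alpha N m' ->
  ((N%:Z) %| m - m')%Z.
Proof.
move=> N0 H H'; rewrite dvdzE /=; apply/(dvdn_partP _ N0) => p.
rewrite mem_primes => /andP[pp _].
rewrite p_part.
suff : (((p ^ logn p N)%N)%:Z %| m - m')%Z by rewrite dvdzE.
have -> : m - m' = (m - alpha p (logn p N)) - (m' - alpha p (logn p N)) by rewrite opprB addrA subrK.
by apply: rpredB; [apply: H | apply: H'].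
Qed.

Lemma PP_exists alpha N : (0 < N)%N -> exists m, PP alpha N m.
Proof.
elim: N {-2}N (leqnn N) => [|n IH] N; first by rewrite leqn0 => /eqP->.
move=> le N0.
have [N1|N1] := leqP N 1.
  have -> : N = 1%N by apply/eqP; rewrite eqn_leq N1 N0.
  by exists 0 => p pp; rewrite logn1 expn0 dvd1z.
set p := pdiv N.
have pp : prime p by apply: pdiv_prime.
set N' := (N`_(p^'))%N.
have pN : (N`_p)%N * N' = N by apply: partnC.
have lg : (0 < logn p N)%N by rewrite logn_gt0 mem_primes pp N0 pdiv_dvd.
have Np2 : (2 <= (N`_p)%N)%N.
  rewrite p_part; apply: (leq_trans (prime_gt1 pp)).
  by rewrite -{1}(expn1 p) leq_exp2l // prime_gt1.
have N'0 : (0 < N')%N by apply: part_gt0.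
have N'lt : (N' <= n)%N.
  rewrite -ltnS; apply: leq_trans le; rewrite -pN.
  rewrite -{1}(mul1n N') ltn_pmul2r //.
have [m' Hm'] := IH N' N'lt N'0.
have co : coprimez ((N`_p)%N)%:Z N'%:Z by rewrite coprimezE /=; apply: coprime_partC.
exists (zchinese ((N`_p)%N)%:Z N'%:Z (alpha p (logn p N)) m') => q pq.
have [qp|qp] := eqVneq q p.
  rewrite qp -p_part -eqz_mod_dvd; apply/eqP; exact: zchinese_modl.
have EqN : logn q N = logn q N'.
  rewrite -{1}pN lognM ?part_gt0 // p_part lognX (logn_prime q pp).
  by rewrite (negbTE qp) muln0.
rewrite EqN.
set z := zchinese _ _ _ _.
have -> : z - alpha q (logn q N') = (z - m') + (m' - alpha q (logn q N')) by rewrite addrA subrK.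
apply: rpredD; last exact: Hm'.
apply: (dvdz_trans _ (_ : (N'%:Z %| z - m')%Z)).
  by rewrite natz_dvd pfactor_dvdnn.
rewrite -eqz_mod_dvd; apply/eqP; exact: zchinese_modr.
Qed.

Section Grp.
Variables (A : zmodType) (phi : {additive A -> A}) (alpha : Zhat).

Lemma zero_gcd (a : A) N N' : (0 < N)%N -> a *+ N = 0 -> a *+ N' = 0 -> a *+ gcdn N N' = 0.
Proof.
move=> N0 aN aN'.
have [u _ /dvdnP [k Hk]] := Bezoutl N' N0.
have : a *+ (gcdn N N' + u * N') = 0 by rewrite Hk mulnC mulrnA aN mul0rn.
by rewrite mulrnDr mulnC mulrnA aN' mul0rn addr0.
Qed.

Lemma W (a : A) N N' m m' : (0 < N)%N -> (0 < N')%N -> a *+ N = 0 -> a *+ N' = 0 ->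
  PP alpha N m -> PP alpha N' m' -> a *~ m = a *~ m'.
Proof.
move=> N0 N'0 aN aN' H H'.
set g := gcdn N N'.
have g0 : (0 < g)%N by rewrite gcdn_gt0 N0.
have ag : a *+ g = 0 by apply: zero_gcd.
have Hg : PP alpha g m by apply: (PP_div N0 (dvdn_gcdl N N') H).
have Hg' : PP alpha g m' by apply: (PP_div N'0 (dvdn_gcdr N N') H').
have /dvdzP [q Hq] := PP_uniq g0 Hg Hg'.
apply/eqP; rewrite -subr_eq0 -mulrzBr Hq mulrzA mulrzAC -pmulrn ag mul0rz.
by [].
Qed.

Definition R (a x : A) : Prop := exists N m, [/\ (0 < N)%N, a *+ N = 0, PP alpha N m &
  x = phi a - a *~ m].

Lemma R_uniq a x y : R a x -> R a y -> x = y.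
Proof.
move=> [N [m [N0 aN H ->]]] [N' [m' [N'0 aN' H' ->]]].
by rewrite (W N0 N'0 aN aN' H H').
Qed.

Lemma R_exists a : periodic A -> exists x, R a x.
Proof.
move=> /(_ a) [N [N0 aN]]; have [m H] := PP_exists alpha N0.
by exists (phi a - a *~ m), N, m.
Qed.

Lemma R_zero : R 0 0.
Proof. exists 1%N, 0; split => //.
- by move=> p pp; rewrite logn1 expn0 dvd1z.
- by rewrite raddf0 mulr0z subrr.
Qed.

Lemma R_sub a b x y : R a x -> R b y -> R (a - b) (x - y).
Proof.
move=> [N [m [N0 aN H ->]]] [N' [m' [N'0 bN' H' ->]]].
have M0 : (0 < N * N')%N by rewrite muln_gt0 N0.
have [m'' H''] := PP_exists alpha M0.
have aM : a *+ (N * N') = 0 by rewrite mulrnA aN mul0rn.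
have bM : b *+ (N * N') = 0 by rewrite mulnC mulrnA bN' mul0rn.
exists (N * N')%N, m''; split => //.
  by rewrite mulrnBl aM bM subrr.
rewrite (W N0 M0 aN aM H H'') (W N'0 M0 bN' bM H' H'') (raddfB phi) mulrzBl.
by rewrite !opprB addrACA [RHS]addrACA [- _ - a *~ _]addrC.
Qed.

Lemma R_phi a x : R a x -> R (phi a) (phi x).
Proof.
move=> [N [m [N0 aN H ->]]]; exists N, m; split => //.
  by rewrite -raddfMn aN raddf0.
by rewrite raddfB raddfMz.
Qed.

Lemma sg_opp (S : A -> Prop) x : is_subgroup S -> S x -> S (- x).
Proof. by move=> [S0 Sb] Sx; rewrite -sub0r; apply: Sb. Qed.

Lemma sg_add (S : A -> Prop) x y : is_subgroup S -> S x -> S y -> S (x + y).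
Proof. by move=> hS Sx Sy; rewrite -[y]opprK; apply: hS.2 => //; apply: sg_opp. Qed.

Lemma sg_muln (S : A -> Prop) x n : is_subgroup S -> S x -> S (x *+ n).
Proof.
move=> hS Sx; elim: n => [|n IH]; first by rewrite mulr0n; exact: hS.1.
by rewrite mulrS; apply: sg_add.
Qed.

Lemma sg_mulz (S : A -> Prop) x k : is_subgroup S -> S x -> S (x *~ k).
Proof.
move=> hS Sx; case: k => n; first by rewrite -pmulrn; apply: sg_muln.
by rewrite NegzE mulrNz -pmulrn; apply: sg_opp => //; apply: sg_muln.
Qed.

Lemma R_list (s : seq A) : periodic A ->
  exists t : seq A, forall x, (exists2 b, b \in s & R b x) <-> x \in t.
Proof.
move=> per; elim: s => [|b s [t Ht]].
  by exists [::] => x; split => // [[b]].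
have [y Hy] := R_exists b per.
exists (y :: t) => x; rewrite in_cons; split.
  move=> [c]; rewrite in_cons => /orP[/eqP->|cs] Rc.
    by rewrite (R_uniq Rc Hy) eqxx.
  by apply/orP; right; apply/Ht; exists c.
move=> /orP[/eqP->|/Ht [c cs Rc]]; first by exists b; rewrite ?mem_head.
by exists c; rewrite // in_cons cs orbT.
Qed.

Lemma rep_list (t : seq A) : exists s : seq A,
  forall v, v \in t -> (exists a, R a v) -> exists2 b, b \in s & R b v.
Proof.
elim: t => [|v t [s Hs]]; first by exists [::].
have [[a Ra]|nR] := classic (exists a, R a v).
  exists (a :: s) => w; rewrite in_cons => /orP[/eqP->|wt] Ex.
    by exists a; rewrite ?mem_head.
  by have [b bs Rb] := Hs w wt Ex; exists b; rewrite // in_cons bs orbT.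
exists s => w; rewrite in_cons => /orP[/eqP->|wt] Ex; first by [].
exact: Hs.
Qed.
End Grp.

Theorem proposition2p4 (A : zmodType) (phi : {additive A -> A}) :
  periodic A ->
  ((exists A0 : A -> Prop,
       is_subgroup A0 /\ finite_index A0 /\ acts_as_mult phi A0)
   <->
   (exists A1 : A -> Prop,
       is_subgroup A1 /\ finite_pred A1 /\ (forall x, A1 x -> A1 (phi x)) /\
       induces_mult_quot phi A1)).
Proof.
move=> per; split.
- move=> [A0 [hA0 [[s Hs] [alpha Hal]]]].
  exists (fun x => exists a, R phi alpha a x).
  split; [split|split; [|split]].
  + by exists 0; apply: R_zero.
  + by move=> x y [a Ra] [b Rb]; exists (a - b); apply: R_sub.
  + have [t Ht] := R_list phi alpha s per.
    exists t => x; rewrite -Ht; split; last by move=> [b _ Rb]; exists b.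
    move=> [a Ra]; have [b bs A0ab] := Hs a.
    have [n [n0 [abn [m [Hm E]]]]] := Hal _ A0ab.
    have R0 : R phi alpha (a - b) 0.
      by exists n, m; split => //; rewrite -E subr0.
    have [y Ry] := R_exists phi alpha b per.
    have := R_sub Ra Ry; move/(R_uniq R0)/eqP; rewrite eq_sym subr_eq0 => /eqP->.
    by exists b.
  + by move=> x [a Ra]; exists (phi a); apply: R_phi.
  + exists alpha => a.
    have [N [N0 aN]] := per a; have [m Hm] := PP_exists alpha N0.
    exists N; split => //; split; first by rewrite aN; exists 0; apply: R_zero.
    by exists m; split => //; exists a, N, m.
- move=> [A1 [hA1 [[t Ht] [_ [alpha Hal]]]]].
  have key : forall a x, R phi alpha a x -> A1 x.
    move=> a x [N [m' [N0 aN H' ->]]].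
    have [n [n0 [A1an [m [Hm A1m]]]]] := Hal a.
    have M0 : (0 < n * N)%N by rewrite muln_gt0 n0.
    have [m'' H''] := PP_exists alpha M0.
    have aM : a *+ (n * N) = 0 by rewrite mulnC mulrnA aN mul0rn.
    rewrite (W N0 M0 aN aM H' H'').
    have Hn : PP alpha n m'' by apply: (PP_div M0 (dvdn_mulr N (dvdnn n)) H'').
    have /dvdzP [q Hq] := PP_uniq n0 Hm Hn.
    have -> : phi a - a *~ m'' = (phi a - a *~ m) + a *~ (m - m'').
      by rewrite mulrzBr addrA subrK.
    apply: sg_add => //; rewrite Hq mulrzA mulrzAC -pmulrn.
    exact: sg_mulz.
  exists (fun a => R phi alpha a 0).
  split; [split|split].
  + exact: R_zero.
  + by move=> x y Rx Ry; rewrite -[0](subr0 0); apply: R_sub.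
  + have [s Hs] := rep_list phi alpha t.
    exists s => a.
    have [x Rx] := R_exists phi alpha a per.
    have xt : x \in t by apply/Ht; exact: key Rx.
    have [b bs Rb] := Hs x xt (ex_intro _ a Rx).
    by exists b => //; rewrite -(subrr x); apply: R_sub.
  + exists alpha => a [N [m [N0 aN H E]]].
    exists N; split => //; split => //; exists m; split => //; by rewrite -E.
Qed.
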